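(* Let $\mathbb{K}$ be a field of characteristic zero, let $V$ be an $n$-dimensional $\mathbb{K}$-vector space, and let $t,s\in\mathbb{K}\setminus\{0,1\}$ be arbitrary. Then the functions $\widehat{\phi}_{n,t}$ and $\widehat{\phi}_{n,s}$ on $\mathcal{L}(V)$ are equal.
   Context: $C^2(V;V)$ is the space of antisymmetric bilinear maps $V\times V\to V$. $\mathcal{L}(V)=\{\lambda\in C^2(V;V): (V,\lambda)\text{ is a Lie algebra}\}$, i.e. $\lambda$ satisfies the Jacobi identity $\lambda(X,\lambda(Y,Z))+\lambda(Y,\lambda(Z,X))+\lambda(Z,\lambda(X,Y))=0$. For $t\in\mathbb{K}$, $\mathcal{D}(t,1,0)(V,\lambda)$ is the space of linear maps $D:V\to V$ with $tD\lambda(X,Y)=\lambda(DX,Y)$ for all $X,Y$, and $\widehat{\phi}_{n,t}:\mathcal{L}(V)\to\{0,1,\dots,n^2\}$ is given by $\widehat{\phi}_{n,t}(\lambda)=\dim\mathcal{D}(t,1,0)(V,\lambda)$. *)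

(* Defs.v *)
From HB Require Import structures.
From mathcomp Require Import all_boot all_order all_algebra.
From mathcomp Require Import boolp.
Set Implicit Arguments. Unset Strict Implicit. Unset Printing Implicit Defensive.
Import GRing.Theory.
Local Open Scope ring_scope.

(* V = K^n realized as row vectors 'rV[K]_n; linear maps V -> V are matrices
   D : 'M[K]_n acting by X |-> X *m D. *)

Definition is_C2 (K : fieldType) (n : nat)
  (lam : 'rV[K]_n -> 'rV[K]_n -> 'rV[K]_n) : Prop :=
  (forall Y, linear (lam^~ Y)) /\ (forall X, linear (lam X)) /\
  (forall X Y, lam X Y = - lam Y X).

Definition is_Lie (K : fieldType) (n : nat)
  (lam : 'rV[K]_n -> 'rV[K]_n -> 'rV[K]_n) : Prop :=
  is_C2 lam /\
  (forall X Y Z, lam X (lam Y Z) + lam Y (lam Z X) + lam Z (lam X Y) = 0).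

Definition Dt10 (K : fieldType) (n : nat) (t : K)
  (lam : 'rV[K]_n -> 'rV[K]_n -> 'rV[K]_n) (D : 'M[K]_n) : Prop :=
  forall X Y, t *: (lam X Y *m D) = lam (X *m D) Y.

(* dimension of the linear subspace Dt10: the largest k <= n^2 such that
   Dt10 contains k linearly independent maps *)
Definition phi_hat (K : fieldType) (n : nat) (t : K)
  (lam : 'rV[K]_n -> 'rV[K]_n -> 'rV[K]_n) : nat :=
  (\max_(k < (n * n).+1 |
     `[< exists Ds : k.-tuple 'M[K]_n,
           free Ds /\ forall i : 'I_k, Dt10 t lam (tnth Ds i) >]) k)%N.

(* Main.v *)
Require Import Defs.
From HB Require Import structures.
From mathcomp Require Import all_boot all_order all_algebra.
From mathcomp Require Import boolp.
Import GRing.Theory.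
Local Open Scope ring_scope.

Lemma lin0 {K : fieldType} {n : nat} {f : 'rV[K]_n -> 'rV[K]_n} :
  linear f -> f 0 = 0.
Proof.
move=> hf; have := hf (-1) 0 0.
by rewrite scaler0 addr0 scaleN1r addNr.
Qed.

Lemma linD {K : fieldType} {n : nat} {f : 'rV[K]_n -> 'rV[K]_n} :
  linear f -> forall u v, f (u + v) = f u + f v.
Proof. by move=> hf u v; have := hf 1 u v; rewrite !scale1r. Qed.

Lemma linZ {K : fieldType} {n : nat} {f : 'rV[K]_n -> 'rV[K]_n} :
  linear f -> forall a u, f (a *: u) = a *: f u.
Proof. by move=> hf a u; have := hf a u 0; rewrite (lin0 hf) !addr0. Qed.

Lemma linN {K : fieldType} {n : nat} {f : 'rV[K]_n -> 'rV[K]_n} :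
  linear f -> forall u, f (- u) = - f u.
Proof. by move=> hf u; rewrite -scaleN1r linZ // scaleN1r. Qed.

Lemma lin_sum {K : fieldType} {n : nat} {f : 'rV[K]_n -> 'rV[K]_n}
  {I : finType} (F : I -> 'rV[K]_n) :
  linear f -> f (\sum_i F i) = \sum_i f (F i).
Proof.
move=> hf; rewrite unlock; elim: (index_enum I) => [|i r IH] /=.
  exact: lin0.
by rewrite linD // IH.
Qed.

From mathcomp Require Import ring.

Definition gS {K : fieldType} {n : nat} (lam : 'rV[K]_n -> 'rV[K]_n -> 'rV[K]_n)
  : 'M[K]_n :=
  (\sum_(p : 'I_n * 'I_n) <<lam (delta_mx 0 p.1) (delta_mx 0 p.2)>>)%MS.

Lemma key {K : fieldType} {n : nat} (lam : 'rV[K]_n -> 'rV[K]_n -> 'rV[K]_n)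
  (hL : is_Lie lam) (t : K) (ht0 : t != 0) (ht1 : t != 1) (D : 'M[K]_n)
  (hD : Dt10 t lam D) : forall X Y Z, lam X (lam Y Z) *m D = 0.
Proof.
case: hL => [[hl [hr ha]] hJ] X Y Z.
have F2 : forall A B, lam A (B *m D) = t *: (lam A B *m D).
  by move=> A B; rewrite ha -hD (ha B) mulNmx scalerN opprK.
have J1 := hJ X Y Z.
have J2 := hJ (X *m D) Y Z.
rewrite -hD in J2. rewrite F2 in J2. rewrite -hD in J2.  rewrite (linZ (hr Y)) (linZ (hr Z)) !F2 in J2.
have J1' : lam X (lam Y Z) *m D + lam Y (lam Z X) *m D + lam Z (lam X Y) *m D = 0.
  by rewrite -!mulmxDl J1 mul0mx.
set a := lam X (lam Y Z) *m D in J1' J2 *.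
set b := lam Y (lam Z X) *m D in J1' J2.
set c := lam Z (lam X Y) *m D in J1' J2.
have Ebc : b + c = - a by apply/eqP; rewrite -addr_eq0 addrC addrA J1'.
have : (t - t * t) *: a = 0.
  rewrite -J2 !scalerA -addrA -scalerDr Ebc scalerN scalerBl.
  by [].
move/eqP; rewrite scaler_eq0 => /orP [|/eqP //].
have -> : t - t * t = t * (1 - t) by ring.
by rewrite mulf_eq0 (negbTE ht0) subr_eq0 eq_sym (negbTE ht1).
Qed.

Lemma inS {K : fieldType} {n : nat} (lam : 'rV[K]_n -> 'rV[K]_n -> 'rV[K]_n)
  (hL : is_Lie lam) X Y : (lam X Y <= gS lam)%MS.
Proof.
case: hL => [[hl [hr ha]] hJ].
rewrite (row_sum_delta X).
have -> := (lin_sum (fun i => X 0 i *: 'e_i) (hl Y)).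
apply: summx_sub => i _.
have -> := (linZ (hl Y)); apply: scalemx_sub.
rewrite (row_sum_delta Y).
have -> := (lin_sum (fun i => Y 0 i *: 'e_i) (hr 'e_i)).
apply: summx_sub => j _.
rewrite (linZ (hr _)); apply: scalemx_sub.
apply: (sumsmx_sup (i, j)) => //.
by rewrite genmxE.
Qed.

Lemma gen0 {K : fieldType} {n : nat} (lam : 'rV[K]_n -> 'rV[K]_n -> 'rV[K]_n)
  (hL : is_Lie lam) (t : K) (ht0 : t != 0) (ht1 : t != 1) (D : 'M[K]_n)
  (hD : Dt10 t lam D) u Y : (u <= gS lam)%MS -> lam (u *m D) Y = 0.
Proof.
have hk := key lam hL t ht0 ht1 D hD.
case: hL => [[hl [hr ha]] hJ].
have g1 : forall A B, lam (lam A B *m D) Y = 0.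
  by move=> A B; rewrite -hD ha mulNmx hk oppr0 scaler0.
move/sub_sumsmxP => [u_ ->].
rewrite mulmx_suml.
have -> := (lin_sum (fun i => u_ i *m <<lam 'e_i.1 'e_i.2>>%MS *m D) (hl Y)).
apply: big1 => p _.
have : (u_ p *m <<lam 'e_p.1 'e_p.2>>%MS <= lam 'e_p.1 'e_p.2)%MS.
  by rewrite -(genmxE (lam 'e_p.1 'e_p.2)) submxMl.
case/submxP => w ->.
rewrite (mx11_scalar w) mul_scalar_mx -scalemxAl.
by rewrite (linZ (hl Y)) g1 scaler0.
Qed.

Definition Pm {K : fieldType} {n : nat} (lam : 'rV[K]_n -> 'rV[K]_n -> 'rV[K]_n)
  : 'M[K]_n := locked (proj_mx (gS lam) (gS lam)^C%MS).

Lemma Pm_sub {K : fieldType} {n : nat} (lam : 'rV[K]_n -> 'rV[K]_n -> 'rV[K]_n)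
  m (W : 'M[K]_(m, n)) : (W *m Pm lam <= gS lam)%MS.
Proof. by rewrite /Pm -lock proj_mx_sub. Qed.

Definition Mm {K : fieldType} {n : nat} (lam : 'rV[K]_n -> 'rV[K]_n -> 'rV[K]_n)
  (t s : K) : 'M[K]_n := 1%:M + (t / s - 1) *: Pm lam.

Lemma Pm_id {K : fieldType} {n : nat} (lam : 'rV[K]_n -> 'rV[K]_n -> 'rV[K]_n)
  m (W : 'M[K]_(m, n)) : (W <= gS lam)%MS -> W *m Pm lam = W.
Proof. by move=> hW; rewrite /Pm -lock proj_mx_id // capmx_compl. Qed.

Lemma transfer {K : fieldType} {n : nat} (lam : 'rV[K]_n -> 'rV[K]_n -> 'rV[K]_n)
  (hL : is_Lie lam) (t s : K) (ht0 : t != 0) (ht1 : t != 1) (hs0 : s != 0)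
  (D : 'M[K]_n) (hD : Dt10 t lam D) : Dt10 s lam (Mm lam t s *m D).
Proof.
have hg := gen0 lam hL t ht0 ht1 D hD.
have hS := inS lam hL.
case: hL => [[hl [hr ha]] hJ].
move=> X Y.
have E1 : lam X Y *m Mm lam t s = (t / s) *: lam X Y.
  rewrite /Mm mulmxDr mulmx1 -scalemxAr Pm_id //.
  by rewrite -{1}(scale1r (lam X Y)) -scalerDl addrC subrK.
rewrite !mulmxA E1 -scalemxAl scalerA mulrC divfK //.
rewrite hD /Mm mulmxDr mulmx1 -scalemxAr mulmxDl (linD (hl Y)).
by rewrite -scalemxAl (linZ (hl Y)) (hg (X *m Pm lam) Y (Pm_sub _ _ _)) scaler0 addr0.
Qed.

Lemma NM {K : fieldType} {n : nat} (lam : 'rV[K]_n -> 'rV[K]_n -> 'rV[K]_n)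
  (t s : K) (ht0 : t != 0) (hs0 : s != 0) :
  Mm lam s t *m Mm lam t s = 1%:M.
Proof.
rewrite /Mm mulmxDl !mulmxDr !mulmx1 mul1mx -!scalemxAl -!scalemxAr.
have hP : (Pm lam <= gS lam)%MS by have := Pm_sub lam n 1%:M; rewrite mul1mx.
rewrite Pm_id // scalerA -scalerDl -addrA -scalerDl.
have -> : (t / s - 1 + (s / t - 1 + (s / t - 1) * (t / s - 1))) = 0.
  by field; rewrite ht0 hs0.
by rewrite scale0r addr0.
Qed.

Lemma transfer_free {K : fieldType} {n : nat}
  (lam : 'rV[K]_n -> 'rV[K]_n -> 'rV[K]_n)
  (hL : is_Lie lam) (t s : K) (ht0 : t != 0) (ht1 : t != 1) (hs0 : s != 0)
  (k : nat) :
  (exists Ds : k.-tuple 'M[K]_n, free Ds /\ forall i : 'I_k, Dt10 t lam (tnth Ds i)) ->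
  (exists Ds : k.-tuple 'M[K]_n, free Ds /\ forall i : 'I_k, Dt10 s lam (tnth Ds i)).
Proof.
move=> [Ds [hf hD]].
exists (map_tuple (mulmx (Mm lam t s)) Ds); split; last first.
  by move=> i; rewrite tnth_map; apply: transfer.
apply/freeP => c hc i.
move/freeP: hf; apply.
have : Mm lam t s *m \sum_(i < k) c i *: Ds`_i = 0.
  rewrite mulmx_sumr -[RHS]hc; apply: eq_bigr => j _.
  by rewrite -scalemxAr (nth_map 0) // size_tuple.
by move/(congr1 (mulmx (Mm lam s t))); rewrite mulmxA NM // mul1mx mulmx0.
Qed.

Theorem theorem3p7 (K : fieldType) (n : nat) (hK : [pchar K] =i pred0)
  (t s : K) (ht0 : t != 0) (ht1 : t != 1) (hs0 : s != 0) (hs1 : s != 1) :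
  forall lam : 'rV[K]_n -> 'rV[K]_n -> 'rV[K]_n,
    is_Lie lam -> phi_hat t lam = phi_hat s lam.
Proof.
move=> lam hL; rewrite /phi_hat; apply: eq_bigl => k.
by apply: asbool_equiv_eq; split; apply: transfer_free.
Qed.
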